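(* Let $\lambda$ be a partition of $n$ and $\lambda'$ its conjugate partition. Then for every integer $m$, $$|\mathrm{QYT}_{=m}(\lambda)|=|\mathrm{QYT}_{=(n+1)-m}(\lambda')|.$$
   Context: A partition $\lambda=(\lambda_1\ge\cdots\ge\lambda_k>0)$ of $n$ has (French) Young diagram with $\lambda_j$ left-justified boxes in row $j$, rows numbered from bottom to top; the conjugate partition $\lambda'$ is the partition whose diagram is obtained by reflecting that of $\lambda$ across the main diagonal (so $\lambda'_i$ is the number of boxes in column $i$ of $\lambda$). A semistandard Young tableau (SSYT) of shape $\lambda$ is a filling of the boxes with positive integers weakly increasing left to right along rows and strictly increasing bottom to top along columns. An SSYT $T$ is quasi-Yamanouchi if for every integer $i>1$ appearing in $T$, the leftmost occurrence of $i$ lies in a column weakly left of (column index $\le$) some occurrence of $i-1$. $\mathrm{QYT}_{=m}(\lambda)$ is the set of quasi-Yamanouchi tableaux of shape $\lambda$ whose largest entry is exactly $m$. *)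

(* Defs.v *)
From mathcomp Require Import all_boot.
From mathcomp Require Import all_order all_algebra.
Set Implicit Arguments. Unset Strict Implicit. Unset Printing Implicit Defensive.

Definition is_partition (la : seq nat) : bool :=
  sorted geq la && all (fun x => 0 < x) la.

Definition conj_part (la : seq nat) : seq nat :=
  mkseq (fun i => count (fun x => i < x) la) (head 0 la).

(* A filling t : seq (seq nat); t`_j is row j (0-indexed, from the bottom,
   French convention); its i-th element is the entry in column i. *)
Definition entry (t : seq (seq nat)) (c : nat * nat) : nat :=
  nth 0 (nth [::] t c.1) c.2.

Definition cells (t : seq (seq nat)) : seq (nat * nat) :=
  [seq (r, c) | r <- iota 0 (size t), c <- iota 0 (size (nth [::] t r))].

Definition shape (t : seq (seq nat)) : seq nat := map size t.

Definition is_SSYT (la : seq nat) (t : seq (seq nat)) : bool :=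
  [&& shape t == la,
      all (fun c => 0 < entry t c) (cells t),
      all (fun r => sorted leq r) t &
      all (fun c => (c.1.+1 < size t) && (c.2 < size (nth [::] t c.1.+1))
                      ==> (entry t c < entry t (c.1.+1, c.2))) (cells t)].

Definition occ_cols (t : seq (seq nat)) (v : nat) : seq nat :=
  [seq c.2 | c <- cells t & entry t c == v].

(* column of the leftmost occurrence of v (meaningful when v occurs) *)
Definition leftmost_col (t : seq (seq nat)) (v : nat) : nat :=
  let s := occ_cols t v in foldr minn (head 0 s) s.

Definition entries (t : seq (seq nat)) : seq nat := [seq entry t c | c <- cells t].

Definition is_QY (t : seq (seq nat)) : bool :=
  all (fun v => (1 < v) ==>
         has (fun c' => leftmost_col t v <= c') (occ_cols t v.-1))
      (entries t).

Definition max_entry (t : seq (seq nat)) : nat := foldr maxn 0 (entries t).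

Definition is_QYT_eq (m : nat) (la : seq nat) (t : seq (seq nat)) : bool :=
  [&& is_SSYT la t, is_QY t & max_entry t == m].

Fixpoint rows_upto (k m : nat) : seq (seq nat) :=
  if k is k'.+1 then [seq x :: r | x <- iota 1 m, r <- rows_upto k' m]
  else [:: [::]].

Definition fillings (la : seq nat) (m : nat) : seq (seq (seq nat)) :=
  foldr (fun k acc => [seq r :: t | r <- rows_upto k m, t <- acc]) [:: [::]] la.

(* |QYT_{=m}(la)| for a natural m: every tableau with largest entry m
   has all entries in {1..m}, so it occurs exactly once in fillings la m. *)
Definition nQYT_nat (la : seq nat) (m : nat) : nat :=
  count (is_QYT_eq m la) (fillings la m).

Definition nQYT (la : seq nat) (m : int) : nat :=
  match m with Posz k => nQYT_nat la k | Negz _ => 0 end.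

(* Main.v *)
Require Import Defs.
From mathcomp Require Import all_boot all_order all_algebra.
From mathcomp Require Import zify.
Set Implicit Arguments. Unset Strict Implicit. Unset Printing Implicit Defensive.


Definition cellsof (la : seq nat) : seq (nat * nat) :=
  [seq (r, c) | r <- iota 0 (size la), c <- iota 0 (nth 0 la r)].

Lemma mem_cellsof la x : (x \in cellsof la) = (x.2 < nth 0 la x.1).
Proof.
case: x => r c /=; apply/allpairsPdep/idP.
  by case=> r' [c' [_]]; rewrite mem_iota => /andP[_]; rewrite add0n => H [-> ->].
move=> H; exists r, c; rewrite !mem_iota /= !add0n H; split=> //.
by case: (ltnP r (size la)) => // Hr; move: H; rewrite nth_default.
Qed.

Lemma cellsof_uniq la : uniq (cellsof la).
Proof.
apply: allpairs_uniq_dep; first exact: iota_uniq.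
  by move=> r _; exact: iota_uniq.
by move=> [a b] [c d] _ _ /= [-> ->].
Qed.

Lemma size_cellsof la : size (cellsof la) = sumn la.
Proof.
rewrite size_allpairs_dep.
rewrite (eq_map (fun r => size_iota 0 (nth 0 la r))).
by rewrite -/(mkseq _ _) mkseq_nth.
Qed.

Lemma cells_shape t : cells t = cellsof (Defs.shape t).
Proof.
rewrite /cells /cellsof /Defs.shape size_map.
congr flatten; apply/eq_in_map => r; rewrite mem_iota => /andP[_ Hr].
by rewrite (nth_map [::]).
Qed.

Lemma geq_trans : transitive geq.
Proof. by move=> a b c H1 H2; apply: leq_trans H2 H1. Qed.

Definition dc (la : seq nat) := forall r r', r <= r' -> nth 0 la r' <= nth 0 la r.

Lemma dc_down la r r' c c' : dc la -> (r, c) \in cellsof la -> r' <= r -> c' <= c ->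
  (r', c') \in cellsof la.
Proof.
rewrite !mem_cellsof /= => D H1 H2 H3.
by apply: leq_ltn_trans H3 _; apply: leq_trans H1 (D _ _ H2).
Qed.

Lemma part_dc la : is_partition la -> dc la.
Proof.
case/andP=> Hs _ r r' Hr.
case: (ltnP r' (size la)) => Hr'; last by rewrite nth_default.
have := sorted_leq_nth geq_trans leqnn 0 Hs; apply => //=.
  by rewrite inE; apply: leq_ltn_trans Hr Hr'.
Qed.

Lemma sorted_geq_head la : sorted geq la -> forall x, x \in la -> x <= head 0 la.
Proof.
case: la => // a s /= Hp x; rewrite inE => /orP[/eqP->//|Hx].
have := order_path_min geq_trans Hp => /allP /(_ x Hx).
done.
Qed.

Lemma count_gt_nth la r c : sorted geq la ->
  (r < count (fun x => c < x) la) = (c < nth 0 la r).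
Proof.
elim: la r => [|a s IH] r /=; first by rewrite nth_nil.
move=> Hp; have Hs := path_sorted Hp.
case: (ltnP c a) => Hca.
  by case: r => [|r] //=; rewrite add1n ltnS IH.
have H0 : count (fun x => c < x) s = 0.
  apply/eqP; rewrite -leqn0 leqNgt -has_count; apply/hasP => -[x Hx /= Hcx].
  have := order_path_min geq_trans Hp => /allP /(_ x Hx) /= Hxa.
  by move: (leq_trans Hxa Hca); rewrite leqNgt Hcx.
rewrite H0 /=; case: r => [|r] /=; first by apply/esym/negbTE; rewrite -leqNgt.
case: (ltnP r (size s)) => Hr; last by rewrite nth_default.
have := order_path_min geq_trans Hp => /allP /(_ (nth 0 s r) (mem_nth 0 Hr)) /= Hxa.
by apply/esym/negbTE; rewrite -leqNgt; apply: leq_trans Hxa Hca.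
Qed.

Lemma nth_conj la c : sorted geq la ->
  nth 0 (conj_part la) c = count (fun x => c < x) la.
Proof.
move=> Hs; rewrite /conj_part.
case: (ltnP c (head 0 la)) => Hc; first by rewrite nth_mkseq.
rewrite nth_default ?size_mkseq //.
apply/esym/eqP; rewrite -leqn0 leqNgt -has_count; apply/hasP => -[x Hx /= Hcx].
by move: (leq_trans (sorted_geq_head Hs Hx) Hc); rewrite leqNgt Hcx.
Qed.

Definition tr_rel la mu := forall r c, (c < nth 0 la r) = (r < nth 0 mu c).

Lemma tr_conj la : is_partition la -> tr_rel la (conj_part la).
Proof.
case/andP=> Hs _ r c; by rewrite nth_conj // count_gt_nth.
Qed.

Lemma tr_sym la mu : tr_rel la mu -> tr_rel mu la.
Proof. by move=> H r c; rewrite H. Qed.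

Lemma tr_dc la mu : dc la -> tr_rel la mu -> dc mu.
Proof.
move=> D T c c' Hc.
case: (posnP (nth 0 mu c')) => [->//|Hp].
have : (nth 0 mu c').-1 < nth 0 mu c' by rewrite prednK.
rewrite -T => H.
have : (nth 0 mu c').-1 < nth 0 mu c by rewrite -T; apply: leq_ltn_trans Hc H.
by rewrite -ltnS prednK.
Qed.

Definition sw (x : nat * nat) := (x.2, x.1).
Lemma sw_inj : injective sw. Proof. by move=> [a b] [c d] [-> ->]. Qed.
Lemma swK : involutive sw. Proof. by case. Qed.

Lemma tr_mem la mu x : tr_rel la mu -> (sw x \in cellsof mu) = (x \in cellsof la).
Proof. by case: x => r c T; rewrite !mem_cellsof /= T. Qed.

Lemma tr_perm la mu : tr_rel la mu -> perm_eq (map sw (cellsof la)) (cellsof mu).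
Proof.
move=> T; apply: uniq_perm.
- by rewrite (map_inj_uniq sw_inj) cellsof_uniq.
- exact: cellsof_uniq.
move=> y; rewrite -{2}(swK y) (tr_mem _ T).
apply/mapP/idP => [[x Hx ->]|H]; first by rewrite swK.
by exists (sw y); rewrite // swK.
Qed.


Definition desc (a b : nat * nat) : bool := a.1 < b.1.
Fixpoint D (w : seq (nat * nat)) k :=
  if k is k'.+1 then D w k' + desc (nth (0,0) w k') (nth (0,0) w k'.+1) else 0.
Definition destd w x := (D w (index x w)).+1.
Definition kle (f : nat * nat -> nat) x y :=
  (f x < f y) || ((f x == f y) && (x.2 <= y.2)).

Definition QFpos la (f : nat * nat -> nat) :=
  forall x, x \in cellsof la -> 0 < f x.
Definition QFrow la (f : nat * nat -> nat) :=
  forall r c, (r, c.+1) \in cellsof la -> f (r, c) <= f (r, c.+1).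
Definition QFcol la (f : nat * nat -> nat) :=
  forall r c, (r.+1, c) \in cellsof la -> (r, c) \in cellsof la -> f (r, c) < f (r.+1, c).
Definition QFqy la (f : nat * nat -> nat) :=
  forall x, x \in cellsof la -> 1 < f x -> exists z y,
    [/\ z \in cellsof la, y \in cellsof la, f z = f x, f y = (f x).-1 & z.2 <= y.2].
Definition QFmax la m (f : nat * nat -> nat) :=
  (forall x, x \in cellsof la -> f x <= m) /\ (exists2 x, x \in cellsof la & f x = m).
Definition QF la m f := [/\ QFpos la f, QFrow la f, QFcol la f, QFqy la f & QFmax la m f].

Definition SYT la w := perm_eq w (cellsof la) /\
  forall x y, x \in cellsof la -> y \in cellsof la -> x.1 <= y.1 -> x.2 <= y.2 ->
    index x w <= index y w.

Lemma kle_total f : total (kle f).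
Proof. move=> x y; rewrite /kle; lia. Qed.

Lemma kle_trans f : transitive (kle f).
Proof. move=> y x z; rewrite /kle => H1 H2; lia. Qed.

Lemma kle_refl f : reflexive (kle f).
Proof. by move=> x; rewrite /kle eqxx leqnn orbT. Qed.

Lemma D_mono w k k' : k <= k' -> D w k <= D w k'.
Proof.
elim: k' => [|k' IH]; first by rewrite leqn0 => /eqP->.
rewrite leq_eqVlt => /orP[/eqP->//|]; rewrite ltnS => /IH H /=.
by apply: leq_trans H (leq_addr _ _).
Qed.

Lemma D_le w k : D w k <= k.
Proof. by elim: k => //= k IH; case: desc; lia. Qed.

Lemma lastdesc w k : 0 < D w k -> exists j, [/\ j < k,
  desc (nth (0,0) w j) (nth (0,0) w j.+1) & D w j.+1 = D w k].
Proof.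
elim: k => [|k IH] //=.
case Hd: desc => /=.
  by move=> _; exists k; rewrite Hd.
rewrite addn0 => /IH [j [Hj Hd' HD]]; exists j; split=> //; first by lia.

Qed.

Section Core.
Variable la : seq nat.
Hypothesis Hdc : dc la.
Local Notation C := (cellsof la).
Local Notation n := (size (cellsof la)).
Local Notation "w `[ i ]" := (nth (0,0) w i) (at level 2).

Lemma SYT_uniq w : SYT la w -> uniq w.
Proof. by case=> /perm_uniq -> _; exact: cellsof_uniq. Qed.
Lemma SYT_size w : SYT la w -> size w = n.
Proof. by case=> /perm_size. Qed.
Lemma SYT_mem w x : SYT la w -> (x \in w) = (x \in C).
Proof. by case=> /perm_mem. Qed.
Lemma SYT_nth w i : SYT la w -> i < n -> w`[i] \in C.
Proof. by move=> S Hi; rewrite -(SYT_mem _ S) mem_nth // (SYT_size S). Qed.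
Lemma SYT_index w i : SYT la w -> i < n -> index w`[i] w = i.
Proof. by move=> S Hi; rewrite index_uniq ?(SYT_size S) ?(SYT_uniq S). Qed.
Lemma SYT_idx_lt w x : SYT la w -> x \in C -> index x w < n.
Proof. by move=> S Hx; rewrite -(SYT_size S) index_mem (SYT_mem _ S). Qed.
Lemma SYT_nth_idx w x : SYT la w -> x \in C -> w`[index x w] = x.
Proof. by move=> S Hx; rewrite nth_index // (SYT_mem _ S). Qed.

Lemma Cl w i : SYT la w -> i.+1 < n ->
  desc w`[i] w`[i.+1] = ~~ (w`[i].2 < w`[i.+1].2).
Proof.
move=> S Hi.
have Ha := SYT_nth S (ltnW Hi); have Hb := SYT_nth S Hi.
have ia := SYT_index S (ltnW Hi); have ib := SYT_index S Hi.
have M := S.2.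
move: Ha Hb ia ib; case: (w`[i]) => r1 c1; case: (w`[i.+1]) => r2 c2 /= Ha Hb ia ib.
rewrite /desc /=.
case: (ltnP r1 r2) => H1; case: (ltnP c1 c2) => H2 //=.
- have Hp : (r2, c1) \in C by apply: dc_down Hdc Hb _ _ => //; exact: ltnW.
  have L1 := M _ _ Ha Hp (ltnW H1) (leqnn _).
  have L2 := M _ _ Hp Hb (leqnn _) (ltnW H2).
  rewrite ia ib in L1 L2.
  have : index (r2, c1) w = i \/ index (r2, c1) w = i.+1 by lia.
  case=> E.
  + have := SYT_nth_idx S Hp; rewrite E.
    have := SYT_nth_idx S Ha; rewrite ia => -> [] E'; lia.
  + have := SYT_nth_idx S Hp; rewrite E.
    have := SYT_nth_idx S Hb; rewrite ib => -> [] E'; lia.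
- have := M _ _ Hb Ha H1 H2; rewrite ia ib; lia.
Qed.

Lemma nodesc w i j : SYT la w -> i + j < n -> D w (i + j) = D w i ->
  w`[i].2 + j <= w`[i + j].2.
Proof.
move=> S; elim: j => [|j IH]; first by rewrite !addn0.
rewrite addnS /= => Hn HD.
have HD' : D w (i + j) = D w i.
  have := D_mono w (leq_addr j i); have := D_mono w (leqnSn (i + j)) => /=; lia.
have := IH (ltnW Hn) HD'.
have := Cl S Hn; move: HD; rewrite /= HD'.
case: desc => /=; first by lia.
move=> _ /esym /negbFE; lia.
Qed.
Lemma destd_QF w : SYT la w -> 0 < n -> QF la (D w n.-1).+1 (destd w).
Proof.
move=> S Hn; split.
- by move=> x _; rewrite /destd.
- move=> r c Hb.
  have Ha : (r, c) \in C by apply: dc_down Hdc Hb (leqnn _) (leqnSn _).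
  by rewrite /destd ltnS; apply: D_mono; apply: S.2 => //=.
- move=> r c Hb Ha; rewrite /destd ltnS.
  have Lij : index (r, c) w <= index (r.+1, c) w by apply: S.2 => //=.
  have Ei := SYT_nth_idx S Ha; have Ej := SYT_nth_idx S Hb.
  have Hj := SYT_idx_lt S Hb.
  move: Lij Ei Ej Hj; set i := index (r, c) w; set j := index (r.+1, c) w => Lij Ei Ej Hj.
  rewrite ltn_neqAle D_mono // andbT; apply/negP => /eqP E.
  have := @nodesc w i (j - i) S; rewrite subnKC // => /(_ Hj (esym E)).
  rewrite Ei Ej /= => H.
  have : j - i = 0 by lia.
  move=> H0; have Eij : i = j by lia.
  by move: Ej; rewrite -Eij Ei => -[] E'; lia.
- move=> x Hx; rewrite /destd ltnS => HD.
  have Hix := SYT_idx_lt S Hx.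
  have [j [Hj Hd HDj]] := lastdesc HD.
  have Hj1 : j.+1 < n by lia.
  exists w`[j.+1], w`[j]; split.
  + exact: SYT_nth.
  + by apply: SYT_nth => //; lia.
  + by rewrite /destd SYT_index // HDj.
  + rewrite /destd (SYT_index S); last by lia.
    by rewrite -HDj /= Hd addn1.
  + have := @Cl w j S Hj1; rewrite Hd ltnNge negbK; by move=> /esym.
- split.
  + move=> x Hx; rewrite /destd ltnS; apply: D_mono.
    by have := SYT_idx_lt S Hx; lia.
  + exists w`[n.-1]; first by apply: (SYT_nth S); lia.
    by rewrite /destd (SYT_index S) //; lia.
Qed.

Section QFlemmas.
Variables (m : nat) (f : nat * nat -> nat).
Hypothesis Q : QF la m f.

Lemma QF_row r c d : (r, c + d) \in C -> f (r, c) <= f (r, c + d).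
Proof.
case: Q => _ Hrow _ _ _.
elim: d => [|d IH]; first by rewrite addn0.
rewrite addnS => H.
have H' : (r, c + d) \in C by apply: dc_down Hdc H (leqnn _) (leqnSn _).
by apply: leq_trans (IH H') (Hrow _ _ H).
Qed.

Lemma QF_colS r c d : (r + d.+1, c) \in C -> f (r, c) < f (r + d.+1, c).
Proof.
case: Q => _ _ Hcol _ _.
elim: d => [|d IH] H.
  rewrite addn1 in H *; apply: Hcol => //.
  by apply: dc_down Hdc H (leqnSn _) (leqnn _).
have H' : (r + d.+1, c) \in C by apply: dc_down Hdc H _ (leqnn _); lia.
apply: ltn_trans (IH H') _; rewrite (addnS r d.+1); apply: Hcol => //.
by rewrite -addnS.
Qed.

Lemma QF_mono x y : x \in C -> y \in C -> x.1 <= y.1 -> x.2 <= y.2 -> f x <= f y.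
Proof.
case: x => r c; case: y => R c' /= Hx Hy H1 H2.
have Hm : (r, c') \in C by apply: dc_down Hdc Hy H1 (leqnn _).
have L1 : f (r, c) <= f (r, c') by have := @QF_row r c (c' - c); rewrite subnKC //; apply.
apply: leq_trans L1 _.
move: H1; rewrite leq_eqVlt => /orP[/eqP->//|H1].
have E : R = r + (R - r).-1.+1 by lia.
by rewrite E in Hy *; apply: ltnW; apply: QF_colS.
Qed.

Lemma QF_colstr x y : x \in C -> y \in C -> x.2 = y.2 -> x.1 < y.1 -> f x < f y.
Proof.
case: x => r c; case: y => R c' /= Hx Hy E H1; subst c'.
have E : R = r + (R - r).-1.+1 by lia.
by rewrite E in Hy *; apply: QF_colS.
Qed.
End QFlemmas.

Lemma std_destd w h : SYT la w -> 0 < n -> {in C, h =1 destd w} -> sort (kle h) C = w.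
Proof.
move=> S Hn Hh.
have Q := destd_QF S Hn.
have Hs : sorted (kle h) w.
  apply/(sortedP (0,0)) => i; rewrite (SYT_size S) => Hi.
  have Ha := SYT_nth S (ltnW Hi); have Hb := SYT_nth S Hi.
  rewrite /kle !Hh // /destd !(SYT_index S) //; last by lia.
  have := @Cl w i S Hi; rewrite /=.
  case: desc => /= HC; first by rewrite addn1 ltnS ltnSn.
  by rewrite addn0 ltnn eqxx /= ltnW //; move: HC => /esym /negbFE.
have Hanti : {in C &, antisymmetric (kle h)}.
  move=> x y Hx Hy; rewrite /kle !Hh // => H.
  have E1 : destd w x = destd w y by lia.
  have E2 : x.2 = y.2.
    move: H; rewrite E1 ltnn eqxx /=; case/andP => H2 H3; apply/eqP; rewrite eqn_leq H2 H3.
    done.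
  case: (ltngtP x.1 y.1) => H1.
  - by have := QF_colstr Q Hx Hy E2 H1; lia.
  - by have := QF_colstr Q Hy Hx (esym E2) H1; lia.
  - by move: H1 E2; case: x {Hx H E1} => a b; case: y {Hy} => c d /= -> ->.
rewrite -(sorted_sort (@kle_trans h) Hs).
apply/(perm_sort_inP (s1 := C)).
- by move=> x y _ _; exact: kle_total.
- by move=> x y z _ _ _; exact: kle_trans.
- exact: Hanti.
- by rewrite perm_sym; case: S.
Qed.

Lemma std_QF m f : QF la m f -> 0 < n ->
  [/\ SYT la (sort (kle f) C), {in C, f =1 destd (sort (kle f) C)} &
      m = (D (sort (kle f) C) n.-1).+1].
Proof.
move=> Q Hn; set w := sort (kle f) C.
have Hp : perm_eq w C by rewrite /w perm_sort.
have Hu : uniq w by rewrite (perm_uniq Hp) cellsof_uniq.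
have Hsz : size w = n by rewrite (perm_size Hp).
have Hs : sorted (kle f) w := sort_sorted (@kle_total f) C.
have Hnth : forall i j, i <= j -> j < n -> kle f w`[i] w`[j].
  move=> i j Hij Hj.
  apply: (sorted_leq_nth (@kle_trans f) (@kle_refl f) (0,0) Hs) => //;
    rewrite inE Hsz //; lia.
have Hmem : forall x, (x \in w) = (x \in C) by move=> x; rewrite (perm_mem Hp).
have Hidx : forall x, x \in C -> index x w < n by move=> x Hx; rewrite -Hsz index_mem Hmem.
have Hni : forall x, x \in C -> w`[index x w] = x by move=> x Hx; rewrite nth_index // Hmem.
have HnC : forall i, i < n -> w`[i] \in C by move=> i Hi; rewrite -Hmem mem_nth // Hsz.
have Hin : forall i, i < n -> index w`[i] w = i by move=> i Hi; rewrite index_uniq // Hsz.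
have S : SYT la w.
  split=> // x y Hx Hy H1 H2; rewrite leqNgt; apply/negP => Hlt.
  have K1 := Hnth _ _ (ltnW Hlt) (Hidx _ Hx); rewrite !Hni // in K1.
  have Fm := QF_mono Q Hx Hy H1 H2.
  move: K1; rewrite /kle ltnNge Fm /= => /andP[/eqP Ef H3].
  have E2 : x.2 = y.2 by apply/eqP; rewrite eqn_leq H2 H3.
  case: (ltngtP x.1 y.1) => H4.
  - by have := QF_colstr Q Hx Hy E2 H4; lia.
  - by lia.
  - have Exy : x = y by move: H4 E2; case: (x) => a b; case: (y) => c d /= -> ->.
    by rewrite Exy ltnn in Hlt.
case: (Q) => Qpos _ _ Qqy [Qb [x0 Hx0 Ex0]].
have Kstep : forall i, i.+1 < n -> f w`[i.+1] = f w`[i] + desc w`[i] w`[i.+1].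
  move=> i Hi.
  have Ha := HnC _ (ltnW Hi); have Hb := HnC _ Hi.
  have Kab := Hnth _ _ (leqnSn i) Hi.
  have Lo : forall u, u \in C -> index u w <= i -> f u <= f w`[i].
    move=> u Hu0 Hui; have := Hnth _ _ Hui (ltnW Hi); rewrite Hni // /kle.
    by case/orP => [/ltnW //|/andP[/eqP-> _]].
  have Hi' : forall u, u \in C -> i < index u w -> f w`[i.+1] <= f u.
    move=> u Hu0 Hui; have := Hnth _ _ Hui (Hidx _ Hu0); rewrite Hni // /kle.
    by case/orP => [/ltnW //|/andP[/eqP-> _]].
  have Hcl := @Cl w i S Hi.
  case: (ltngtP (f w`[i]) (f w`[i.+1])) => Hab.
  - have Hpa := Qpos _ Ha.
    have [z [y [Hz Hy Ez Ey Hzy]]] := Qqy _ Hb (leq_ltn_trans Hpa Hab).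
    have Iy : index y w <= i.
      have Hpb := Qpos _ Hb.
      rewrite leqNgt; apply/negP => /(Hi' _ Hy); rewrite Ey => Hc; clear -Hc Hpb; lia.
    have Fy := Lo _ Hy Iy.
    have Ea : f w`[i] = f y by clear -Fy Hab Ey; lia.
    have Iz : i < index z w.
      rewrite ltnNge; apply/negP => /(Lo _ Hz); rewrite Ez => Hc; clear -Hc Hab; lia.
    have Kz := Hnth _ _ Iz (Hidx _ Hz); rewrite Hni // /kle Ez ltnn eqxx /= in Kz.
    have Ky := Hnth _ _ Iy (ltnW Hi); rewrite Hni // /kle Ea ltnn eqxx /= in Ky.
    have Hd : desc w`[i] w`[i.+1].
      rewrite Hcl -leqNgt; apply: leq_trans Kz _; apply: leq_trans Hzy Ky.
    by rewrite Hd; clear -Ea Ey Hab; lia.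
  - by move: Kab; rewrite /kle ltnNge (ltnW Hab) /= => /andP[/eqP E _]; lia.
  - have Hd : ~~ desc w`[i] w`[i.+1].
      rewrite Hcl negbK.
      move: Kab; rewrite /kle Hab ltnn eqxx /=; rewrite leq_eqVlt => /orP[/eqP E|//].
      have Hne : w`[i] != w`[i.+1].
        apply/negP => /eqP E'; have := Hin _ Hi; rewrite -E' Hin; lia.
      case: (ltngtP w`[i].1 w`[i.+1].1) => H4.
      + by have := QF_colstr Q Ha Hb E H4; lia.
      + by have := QF_colstr Q Hb Ha (esym E) H4; lia.
      + have E' : w`[i] = w`[i.+1].
          by move: H4 E; case: (w`[i]) => a b; case: (w`[i.+1]) => c d /= -> ->.
        by rewrite E' eqxx in Hne.
    by rewrite (negbTE Hd) addn0.
have F0 : f w`[0] = 1.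
  have H0 := HnC _ Hn; have P0 := Qpos _ H0.
  case: (ltnP 1 (f w`[0])) => H1; last by lia.
  have [z [y [Hz Hy Ez Ey Hzy]]] := Qqy _ H0 H1.
  have := Hnth _ _ (leq0n (index y w)) (Hidx _ Hy); rewrite Hni // /kle Ey; lia.
have Fk : forall k, k < n -> f w`[k] = (D w k).+1.
  elim=> [|k IH] Hk; first by rewrite F0.
  by rewrite Kstep // IH /=; lia.
split=> //.
- by move=> x Hx; rewrite /destd -Fk ?Hni // Hidx.
- have Hl : n.-1 < n by lia.
  rewrite -Fk //; apply/eqP; rewrite eqn_leq Qb ?HnC //=.
  have Hle : index x0 w <= n.-1 by have := Hidx _ Hx0; lia.
  have := Hnth _ _ Hle Hl; rewrite Hni // /kle Ex0 andbT.
  by case/orP => [/ltnW //|/andP[/eqP-> _]].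
Qed.
End Core.


Lemma nth_sw (w : seq (nat * nat)) i : nth (0,0) (map sw w) i = sw (nth (0,0) w i).
Proof. by elim: w i => [|a w IH] [|i] //=. Qed.

Lemma index_sw (w : seq (nat * nat)) x : index x (map sw w) = index (sw x) w.
Proof. by rewrite -{1}(swK x) index_map //; exact: sw_inj. Qed.

Lemma SYT_tr la mu w : tr_rel la mu -> SYT la w -> SYT mu (map sw w).
Proof.
move=> T [Hp Hm]; split.
  apply: perm_trans (tr_perm T); exact: perm_map.
move=> x y Hx Hy H1 H2; rewrite !index_sw.
apply: Hm => //.
- by rewrite -(tr_mem _ T) swK.
- by rewrite -(tr_mem _ T) swK.
Qed.

Lemma D_tr la w : dc la -> SYT la w -> forall k, k < size (cellsof la) ->
  D (map sw w) k + D w k = k.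
Proof.
move=> Hdc S; elim=> [//|k IH] Hk /=.
have := @Cl la Hdc w k S Hk; rewrite !nth_sw /desc /= => ->.
have := IH (ltnW Hk); case: (_ < _) => /=; lia.
Qed.

Definition Phi la (f : nat * nat -> nat) := destd (map sw (sort (kle f) (cellsof la))).

Lemma size_tr la mu : tr_rel la mu -> size (cellsof mu) = size (cellsof la).
Proof. by move=> T; rewrite -(perm_size (tr_perm T)) size_map. Qed.

Lemma QF_range la m f : dc la -> 0 < size (cellsof la) -> QF la m f ->
  0 < m /\ m <= size (cellsof la).
Proof.
move=> Hdc Hn Q; have [_ _ ->] := std_QF Hdc Q Hn.
by have := D_le (sort (kle f) (cellsof la)) (size (cellsof la)).-1; lia.
Qed.

Lemma Phi_QF la mu m f : dc la -> tr_rel la mu -> 0 < size (cellsof la) ->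
  QF la m f -> QF mu ((size (cellsof la)).+1 - m) (Phi la f).
Proof.
move=> Hdc T Hn Q.
have [S Hf Hm] := std_QF Hdc Q Hn.
have S' := SYT_tr T S.
have Hdm := tr_dc Hdc T.
have Hsz := size_tr T.
have Hn' : 0 < size (cellsof mu) by rewrite Hsz.
have Q' := destd_QF Hdm S' Hn'.
have E := @D_tr la _ Hdc S (size (cellsof la)).-1.
have Hl := D_le (sort (kle f) (cellsof la)) (size (cellsof la)).-1.
rewrite Hsz in Q'.
suff -> : (size (cellsof la)).+1 - m = (D (map sw (sort (kle f) (cellsof la))) (size (cellsof la)).-1).+1 by [].
have := E (ltac:(lia)); lia.
Qed.

Lemma Phi_inj la mu m f1 f2 : dc la -> tr_rel la mu -> 0 < size (cellsof la) ->
  QF la m f1 -> QF la m f2 -> {in cellsof mu, Phi la f1 =1 Phi la f2} ->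
  {in cellsof la, f1 =1 f2}.
Proof.
move=> Hdc T Hn Q1 Q2 E.
have [S1 Hf1 _] := std_QF Hdc Q1 Hn.
have [S2 Hf2 _] := std_QF Hdc Q2 Hn.
have Hdm := tr_dc Hdc T.
have Hn' : 0 < size (cellsof mu) by rewrite (size_tr T).
have E1 := std_destd Hdm (SYT_tr T S1) Hn' (h := Phi la f2) (fun x Hx => esym (E x Hx)).
have E2 := std_destd Hdm (SYT_tr T S2) Hn' (h := Phi la f2) (fun x Hx => erefl).
have Ew : sort (kle f1) (cellsof la) = sort (kle f2) (cellsof la).
  by apply: (inj_map sw_inj); rewrite -E1 -E2.
move=> x Hx; rewrite Hf1 // Hf2 // Ew //.
Qed.


Definition mk (f : nat * nat -> nat) (la : seq nat) : seq (seq nat) :=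
  [seq [seq f (r, c) | c <- iota 0 (nth 0 la r)] | r <- iota 0 (size la)].

Lemma size_mk f la : size (mk f la) = size la.
Proof. by rewrite size_map size_iota. Qed.

Lemma nth_mk f la r : r < size la ->
  nth [::] (mk f la) r = [seq f (r, c) | c <- iota 0 (nth 0 la r)].
Proof. by move=> Hr; rewrite (nth_map 0) ?size_iota // nth_iota. Qed.

Lemma shape_mk f la : Defs.shape (mk f la) = la.
Proof.
apply: (@eq_from_nth _ 0); first by rewrite size_map size_mk.
move=> r; rewrite size_map size_mk => Hr.
by rewrite (nth_map [::]) ?size_mk // nth_mk // size_map size_iota.
Qed.

Lemma entry_mk f la x : x \in cellsof la -> entry (mk f la) x = f x.
Proof.
case: x => r c; rewrite mem_cellsof /= => H.
have Hr : r < size la by case: (ltnP r (size la)) => // Hr; move: H; rewrite nth_default.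
by rewrite /entry /= nth_mk // (nth_map 0) ?size_iota // nth_iota.
Qed.

Lemma mk_entry t : mk (entry t) (Defs.shape t) = t.
Proof.
apply: (@eq_from_nth _ [::]); first by rewrite size_mk size_map.
move=> r; rewrite size_mk size_map => Hr.
rewrite nth_mk ?size_map //.
apply: (@eq_from_nth _ 0); first by rewrite size_map size_iota (nth_map [::]).
move=> c; rewrite size_map size_iota (nth_map [::]) // => Hc.
by rewrite (nth_map 0) ?size_iota // nth_iota.
Qed.

Lemma eq_mk f g la : {in cellsof la, f =1 g} -> mk f la = mk g la.
Proof.
move=> E; apply/eq_in_map => r; rewrite mem_iota => /andP[_ Hr].
apply/eq_in_map => c; rewrite mem_iota => /andP[_ Hc].
by apply: E; rewrite mem_cellsof.
Qed.

Lemma maxP s b : (foldr maxn 0 s <= b) = all (fun x => x <= b) s.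
Proof. by elim: s => //= a s IH; rewrite geq_max IH. Qed.

Lemma le_max s x : x \in s -> x <= foldr maxn 0 s.
Proof.
move=> Hx; have := maxP s (foldr maxn 0 s); rewrite leqnn => /esym /allP.
exact.
Qed.

Lemma max_mem s : s != [::] -> foldr maxn 0 s \in s.
Proof.
elim: s => // a s IH _.
change (maxn a (foldr maxn 0 s) \in a :: s).
case: s IH => [|b s] IH; first by rewrite maxn0 mem_head.
move: (IH isT); move: (foldr maxn 0 (b :: s)) => M HM.
case: (leqP a M) => H; first by rewrite inE HM orbT.
by rewrite mem_head.
Qed.

Lemma min_le d s x : x \in s -> foldr minn d s <= x.
Proof.
elim: s => //= a s IH; rewrite inE => /orP[/eqP->|/IH H].
  exact: geq_minl.
by apply: leq_trans (geq_minr _ _) H.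
Qed.

Lemma min_mem d s : foldr minn d s \in d :: s.
Proof.
elim: s => [|a s IH] /=; first exact: mem_head.
case: (leqP a (foldr minn d s)) => H.
  by rewrite !inE eqxx orbT.
move: IH; rewrite !inE => /orP[->//|->].
by rewrite !orbT.
Qed.

Lemma leftmost_mem t v : occ_cols t v != [::] -> leftmost_col t v \in occ_cols t v.
Proof.
rewrite /leftmost_col; case: (occ_cols t v) => // a s _.
by have := min_mem a (a :: s); rewrite /= inE => /orP[/eqP->|//]; rewrite mem_head.
Qed.

Lemma mem_occ t v c : (c \in occ_cols t v) = has (fun x => (x.2 == c) && (entry t x == v)) (cells t).
Proof.
apply/mapP/hasP => [[x]|[x Hx /andP[/eqP<- Hv]]].
  by rewrite mem_filter => /andP[Hv Hx] ->; exists x; rewrite // eqxx.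
by exists x; rewrite // mem_filter Hv.
Qed.

Lemma QYT_QF m la t : 0 < size (cellsof la) -> is_QYT_eq m la t ->
  Defs.shape t = la /\ QF la m (entry t).
Proof.
move=> Hn /and3P[/and4P[/eqP Hsh Hpos Hrows Hcol] Hqy /eqP Hmax].
have Hc : cells t = cellsof la by rewrite cells_shape Hsh.
rewrite Hc in Hpos Hcol.
have Hsz : size t = size la by rewrite -Hsh size_map.
have Hrow : forall r, r < size t -> size (nth [::] t r) = nth 0 la r.
  by move=> r Hr; rewrite -Hsh (nth_map [::]).
have Hrsz : forall r c, (r, c) \in cellsof la -> r < size t.
  move=> r c; rewrite mem_cellsof /= Hsz => H.
  by case: (ltnP r (size la)) => // Hr; move: H; rewrite nth_default.
split=> //; split.
- by move=> x Hx; apply: (allP Hpos).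
- move=> r c H; have Hr := Hrsz _ _ H.
  have Hs : sorted leq (nth [::] t r) by apply: (allP Hrows); rewrite mem_nth.
  move: H; rewrite mem_cellsof /= -Hrow // => H.
  rewrite /entry /=.
  apply: (sorted_leq_nth leq_trans leqnn 0 Hs) => //; rewrite inE //; lia.
- move=> r c Hb Ha.
  have Hr1 := Hrsz _ _ Hb.
  have Hcc : c < size (nth [::] t r.+1) by rewrite Hrow //; move: Hb; rewrite mem_cellsof.
  by have := allP Hcol _ Ha; rewrite /= Hr1 Hcc /=; apply.
- move=> x Hx H1.
  have Hv : entry t x \in entries t by rewrite /entries map_f // Hc.
  have := allP Hqy _ Hv; rewrite H1 /= => /hasP[c' Hc' Hle].
  move: Hc'; rewrite mem_occ => /hasP[y Hy /andP[/eqP Ey /eqP Ev]].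
  have Hne : occ_cols t (entry t x) != [::].
    apply/eqP => E; have : x.2 \in occ_cols t (entry t x).
      by rewrite mem_occ; apply/hasP; exists x; rewrite ?Hc // !eqxx.
    by rewrite E.
  have := leftmost_mem Hne; rewrite mem_occ => /hasP[z Hz /andP[/eqP Ez /eqP Evz]].
  by exists z, y; rewrite -Hc; split=> //; rewrite Ez Ey.
- split.
  + by move=> x Hx; rewrite -Hmax; apply: le_max; apply: map_f; rewrite Hc.
  + have Hne : entries t != [::].
      by rewrite /entries Hc; case: (cellsof la) Hn.
    have := max_mem Hne; rewrite -/(max_entry t) Hmax => /mapP[x1 Hx1 E1].
    by exists x1; [rewrite -Hc | rewrite -E1].
Qed.

Lemma QF_QYT m la f : QF la m f -> is_QYT_eq m la (mk f la).
Proof.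
case=> Qpos Qrow Qcol Qqy [Qb [x0 Hx0 Ex0]].
set t := mk f la.
have Hsh : Defs.shape t = la by rewrite shape_mk.
have Hc : cells t = cellsof la by rewrite cells_shape Hsh.
have Ee : forall x, x \in cellsof la -> entry t x = f x by move=> x; exact: entry_mk.
have Hent : forall v, v \in entries t -> exists2 x, x \in cellsof la & v = f x.
  by move=> v /mapP[x Hx ->]; rewrite Hc in Hx; exists x; rewrite // Ee.
apply/and3P; split.
- apply/and4P; split.
  + by rewrite Hsh.
  + by rewrite Hc; apply/allP => x Hx; rewrite Ee // Qpos.
  + apply/allP => row /mapP[r]; rewrite mem_iota => /andP[_ Hr] ->.
    apply/(sortedP 0) => i; rewrite size_map size_iota => Hi.
    rewrite !(nth_map 0) ?size_iota //; last by lia.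
    rewrite !nth_iota //; last by lia.
    by apply: Qrow; rewrite mem_cellsof.
  + rewrite Hc; apply/allP => -[r c] Hx /=; apply/implyP => /andP[Hr Hcc].
    have Hb : (r.+1, c) \in cellsof la.
      by rewrite mem_cellsof /=; move: Hcc; rewrite -[nth 0 la r.+1]/(nth 0 la r.+1) -Hsh (nth_map [::]).
    by rewrite !Ee //; apply: Qcol.
- apply/allP => v /Hent [x Hx ->]; apply/implyP => H1.
  have [z [y [Hz Hy Ez Ey Hzy]]] := Qqy _ Hx H1.
  apply/hasP; exists y.2.
    by rewrite mem_occ; apply/hasP; exists y; rewrite ?Hc // eqxx Ee // Ey eqxx.
  apply: leq_trans Hzy; apply: min_le.
  by rewrite mem_occ; apply/hasP; exists z; rewrite ?Hc // eqxx Ee // Ez eqxx.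
- rewrite eqn_leq maxP; apply/andP; split.
  + by apply/allP => v /Hent [x Hx ->]; apply: Qb.
  + by rewrite -Ex0 -(Ee _ Hx0); apply: le_max; apply: map_f; rewrite Hc.
Qed.


Lemma rows_upto_mem k m r : size r = k -> all (fun x => 0 < x <= m) r -> r \in rows_upto k m.
Proof.
elim: k r => [|k IH] [|x r] //= [Hs] /andP[Hx Hr].
apply/allpairsP; exists (x, r); split => //=; last by apply: IH.
by rewrite mem_iota add1n ltnS.
Qed.

Lemma fillings_mem la m t : Defs.shape t = la ->
  (forall row, row \in t -> all (fun x => 0 < x <= m) row) -> t \in fillings la m.
Proof.
elim: la t => [|a la IH] [|row t] //= [Ha Hsh] Hall.
apply/allpairsP; exists (row, t); split => //=.
- by apply: rows_upto_mem => //; apply: Hall; rewrite mem_head.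
- by apply: IH => // r Hr; apply: Hall; rewrite inE Hr orbT.
Qed.

Lemma rows_upto_uniq k m : uniq (rows_upto k m).
Proof.
elim: k => //= k IH; apply: allpairs_uniq => //; first exact: iota_uniq.
by move=> [a b] [c d] _ _ /= [-> ->].
Qed.

Lemma fillings_uniq la m : uniq (fillings la m).
Proof.
elim: la => //= a la IH; apply: allpairs_uniq => //; first exact: rows_upto_uniq.
by move=> [p q] [c d] _ _ /= [-> ->].
Qed.

Lemma QYT_fill m la t : 0 < size (cellsof la) -> is_QYT_eq m la t -> t \in fillings la m.
Proof.
move=> Hn Ht; have [Hsh [Qpos _ _ _ [Qb _]]] := QYT_QF Hn Ht.
apply: fillings_mem => // row /(nthP [::]) [r Hr <-].
apply/allP => x /(nthP 0) [c Hc <-].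
have Hrc : (r, c) \in cellsof la.
  by rewrite mem_cellsof /= -Hsh (nth_map [::]).
by rewrite (Qpos _ Hrc) (Qb _ Hrc).
Qed.

Lemma count_le la mu k : dc la -> tr_rel la mu -> 0 < size (cellsof la) ->
  nQYT_nat la k <= nQYT_nat mu ((size (cellsof la)).+1 - k).
Proof.
move=> Hdc T Hn.
rewrite /nQYT_nat -!size_filter.
have Hus : uniq (filter (is_QYT_eq k la) (fillings la k)) by apply: filter_uniq; apply: fillings_uniq.
pose F t := mk (Phi la (entry t)) mu.
rewrite -(size_map F); apply: uniq_leq_size.
- rewrite map_inj_in_uniq // => t1 t2; rewrite !mem_filter => /andP[H1 _] /andP[H2 _] E.
  have [Sh1 Q1] := QYT_QF Hn H1; have [Sh2 Q2] := QYT_QF Hn H2.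
  have Ee : {in cellsof mu, Phi la (entry t1) =1 Phi la (entry t2)}.
    by move=> y Hy; have := congr1 (fun t => entry t y) E; rewrite /F /= !entry_mk.
  have Ef := Phi_inj Hdc T Hn Q1 Q2 Ee.
  by rewrite -(mk_entry t1) -(mk_entry t2) Sh1 Sh2; apply: eq_mk.
- move=> t' /mapP[t]; rewrite mem_filter => /andP[Ht _] ->.
  have [Sh Q] := QYT_QF Hn Ht.
  have HQ := QF_QYT (Phi_QF Hdc T Hn Q).
  rewrite mem_filter HQ /=; apply: QYT_fill HQ.
  by rewrite (size_tr T).
Qed.

Lemma nQYT_zero la k : dc la -> 0 < size (cellsof la) ->
  (k == 0) || (size (cellsof la) < k) -> nQYT_nat la k = 0.
Proof.
move=> Hdc Hn Hk; rewrite /nQYT_nat; apply/eqP; rewrite -leqn0 leqNgt -has_count.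
apply/negP => /hasP[t _ Ht].
have [_ Q] := QYT_QF Hn Ht.
have := QF_range Hdc Hn Q; lia.
Qed.

Theorem theorem3p3 (n : nat) (la : seq nat) (m : int) :
  is_partition la -> sumn la = n -> 0 < n ->
  nQYT la m = nQYT (conj_part la) ((n.+1)%:Z - m)%R.
Proof.
move=> Hp Hs Hn0.
have Hdc := part_dc Hp; have T := tr_conj Hp.
have Hdm := tr_dc Hdc T; have T' := tr_sym T.
have Hn : size (cellsof la) = n by rewrite size_cellsof.
have Hn' : size (cellsof (conj_part la)) = n by rewrite (size_tr T).
case: m => [k|j].
- case: (leqP k n.+1) => Hk.
  + rewrite subzn //= ; apply/eqP; rewrite eqn_leq; apply/andP; split.
    * by have := @count_le _ _ k Hdc T; rewrite Hn; apply; lia.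
    * have := @count_le _ _ (n.+1 - k) Hdm T'; rewrite Hn' subKn //; apply; lia.
  + have -> : (n.+1%:Z - k%:Z)%R = Negz (k - n.+2) by rewrite NegzE; lia.
    have P0 : 0 < size (cellsof la) by rewrite Hn.
    have P1 : (k == 0) || (size (cellsof la) < k) by rewrite Hn; apply/orP; right; lia.
    by rewrite /= (nQYT_zero Hdc P0 P1).
- have -> : (n.+1%:Z - Negz j)%R = Posz (n.+1 + j.+1) by rewrite NegzE; lia.
  have P0 : 0 < size (cellsof (conj_part la)) by rewrite Hn'.
  have P1 : (n.+1 + j.+1 == 0) || (size (cellsof (conj_part la)) < n.+1 + j.+1).
    by rewrite Hn'; apply/orP; right; lia.
  by rewrite /= (nQYT_zero Hdm P0 P1).
Qed.
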